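(* For every homeomorphism $h$ of the Kirch space $(\mathbb{N},\tau_K)$ and every odd prime $p$, we have $\tilde h(\mathcal{F}_{\{p,2p\}})=\mathcal{F}_{\{p,2p\}}$, where $\tilde h(\mathcal{F})=\{h[A]:A\in\mathcal{F}\}$.
   Context: $\mathbb{N}=\{1,2,\dots\}$, $\mathbb{N}_0=\{0\}\cup\mathbb{N}$. The Kirch topology $\tau_K$ on $\mathbb{N}$ is generated by the base of all $a+b\mathbb{N}_0=\{a+bn:n\in\mathbb{N}_0\}$ with $a,b\in\mathbb{N}$ coprime and $b$ square-free. Closures $\overline{U}$ are in $\tau_K$; $\tau_x=\{U\in\tau_K:x\in U\}$. For finite $E\subseteq\mathbb{N}$, $\mathcal{F}_E=\{B\subseteq\mathbb{N}:\exists (U_x)_{x\in E}\in\prod_{x\in E}\tau_x\ (\bigcap_{x\in E}\overline{U_x}\subseteq B)\}$. $h[A]=\{h(a):a\in A\}$. *)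

(* Defs.v *)
(* Sets of naturals are predicates
   nat -> Prop; the space N = {1,2,...} is the set of n with 0 < n. *)
From mathcomp Require Import all_boot.
Set Implicit Arguments. Unset Strict Implicit. Unset Printing Implicit Defensive.

Definition Npos (n : nat) : Prop := 0 < n.

Definition squarefree (b : nat) : Prop := forall p, prime p -> ~ (p * p %| b).

Definition progr (a b : nat) : nat -> Prop := fun x => exists n, x = a + b * n.

Definition basic_set (a b : nat) : Prop :=
  0 < a /\ 0 < b /\ coprime a b /\ squarefree b.

Definition kopen (U : nat -> Prop) : Prop :=
  (forall x, U x -> Npos x) /\
  forall x, U x -> exists a b, basic_set a b /\ progr a b x /\
                         (forall y, progr a b y -> U y).

Definition kclosure (U : nat -> Prop) : nat -> Prop :=
  fun x => Npos x /\ forall V, kopen V -> V x -> exists y, V y /\ U y.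

Definition FE (E : seq nat) (B : nat -> Prop) : Prop :=
  (forall x, B x -> Npos x) /\
  exists Us : nat -> (nat -> Prop),
    (forall x, x \in E -> kopen (Us x) /\ Us x x) /\
    (forall y, Npos y -> (forall x, x \in E -> kclosure (Us x) y) -> B y).

Definition khomeo (h : nat -> nat) : Prop :=
  (forall x, Npos x -> Npos (h x)) /\
  (forall x y, Npos x -> Npos y -> h x = h y -> x = y) /\
  (forall y, Npos y -> exists x, Npos x /\ h x = y) /\
  (forall U, kopen U -> kopen (fun y => exists x, U x /\ h x = y)) /\
  (forall V, kopen V -> kopen (fun x => Npos x /\ V (h x))).

Definition image (h : nat -> nat) (A : nat -> Prop) : nat -> Prop :=
  fun y => exists x, A x /\ h x = y.

Definition push_family (h : nat -> nat) (F : (nat -> Prop) -> Prop)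
  : (nat -> Prop) -> Prop :=
  fun B => exists A, F A /\ B = image h A.

(* Main.v *)
Require Import Defs.
From mathcomp Require Import all_boot.
From mathcomp Require Import zify.
From Stdlib Require Import Classical FunctionalExtensionality PropExtensionality.
Set Implicit Arguments. Unset Strict Implicit. Unset Printing Implicit Defensive.

Lemma sqf_dvd d b : d %| b -> squarefree b -> squarefree d.
Proof. move=> db sb l pl ll. apply: (sb l pl). exact: dvdn_trans ll db. Qed.

Lemma sqf_prime q : prime q -> squarefree q.
Proof.
move=> pq l pl ll.
have lq : l %| q by apply: dvdn_trans ll; apply: dvdn_mulr.
move: lq; rewrite dvdn_prime2 // => /eqP el; subst l.
have := dvdn_leq (prime_gt0 pq) ll. have := prime_gt1 pq. nia.
Qed.

Lemma sqf1 : squarefree 1.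
Proof.
move=> l pl ll. have : l %| 1 by apply: dvdn_trans ll; apply: dvdn_mulr.
rewrite dvdn1 => /eqP el; subst l. by [].
Qed.

Lemma gcd_gt0 b e : 0 < b -> 0 < gcdn b e.
Proof. move=> b0; by rewrite gcdn_gt0 b0. Qed.

Lemma divg_gt0 b e : 0 < b -> 0 < b %/ gcdn b e.
Proof. move=> b0; rewrite divn_gt0 ?gcd_gt0 //; apply: dvdn_leq => //; exact: dvdn_gcdl. Qed.

Lemma cop_div b e : 0 < b -> squarefree b -> coprime e (b %/ gcdn b e).
Proof.
move=> b0 sb. set g := gcdn b e.
have g0 : 0 < g by exact: gcd_gt0.
have c0 : 0 < b %/ g by exact: divg_gt0.
rewrite /coprime. set k := gcdn e (b %/ g).
have k0 : 0 < k by rewrite gcdn_gt0 c0 orbT.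
case: (ltngtP k 1) => // [|k1]; first by lia.
have pl := pdiv_prime k1.
have lk := pdiv_dvd k.
have le : pdiv k %| e by apply: dvdn_trans lk (dvdn_gcdl _ _).
have lb : pdiv k %| b %/ g by apply: dvdn_trans lk (dvdn_gcdr _ _).
have lg : pdiv k %| g.
  rewrite dvdn_gcd le andbT. apply: dvdn_trans lb _. apply: dvdn_div. exact: dvdn_gcdl.
case: (sb _ pl). rewrite -(divnK (dvdn_gcdl b e)) -/g. exact: dvdn_mul.
Qed.

Lemma dvd_div_notdvd b e l : 0 < b -> prime l -> l %| b -> ~~ (l %| e) -> l %| b %/ gcdn b e.
Proof.
move=> b0 pl lb le.
move: lb; rewrite -{1}(divnK (dvdn_gcdl b e)) Euclid_dvdM // => /orP [//|lg].
by move: le; rewrite (dvdn_trans lg (dvdn_gcdr _ _)).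
Qed.

Lemma sqf_mul m n : squarefree m -> squarefree n -> coprime m n -> squarefree (m * n).
Proof.
move=> sm sn cmn l pl.
case lm : (l %| m).
  have ln : ~~ (l %| n).
    apply/negP => ln. have : l %| gcdn m n by rewrite dvdn_gcd lm ln.
    rewrite (eqP cmn) dvdn1 => /eqP l1. by rewrite l1 in pl.
  have c : coprime (l * l) n by rewrite coprimeMl prime_coprime // ln.
  rewrite Gauss_dvdl //. exact: sm.
have c : coprime (l * l) m by rewrite coprimeMl prime_coprime // lm.
rewrite Gauss_dvdr //. exact: sn.
Qed.

Lemma sqf_crt g x e : 0 < g -> squarefree g ->
  (forall l, prime l -> l %| g -> x = e %[mod l]) -> x = e %[mod g].
Proof.
elim/ltn_ind: g => g IH g0 sg H.
case: (ltngtP g 1) => [|g1|->]; [lia| |by rewrite !modn1].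
set l := pdiv g. have pl : prime l := pdiv_prime g1.
have lg : l %| g := pdiv_dvd g.
set g' := g %/ l.
have eg : g = l * g' by rewrite /g' mulnC divnK.
have g'0 : 0 < g' by rewrite /g' divn_gt0 ?prime_gt0 // dvdn_leq.
have lg' : ~~ (l %| g').
  apply/negP => lg'. apply: (sg l pl). by rewrite eg dvdn_pmul2l ?prime_gt0.
have cl : coprime l g' by rewrite prime_coprime.
apply/eqP. rewrite eg chinese_remainder //. apply/andP; split; apply/eqP.
  exact: H.
apply: IH => //.
- rewrite eg. have := prime_gt1 pl. nia.
- apply: sqf_dvd sg. rewrite eg. exact: dvdn_mull.
- move=> l' pl' l'g. apply: H => //. apply: dvdn_trans l'g _. rewrite eg. exact: dvdn_mull.
Qed.

Lemma crt2 x e d b : 0 < d -> 0 < b -> squarefree b ->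
  (forall l, prime l -> l %| d -> l %| b -> x = e %[mod l]) ->
  exists n1 n2, x + d * n1 = e + b * n2.
Proof.
move=> d0 b0 sb H.
set g := gcdn d b.
have g0 : 0 < g by rewrite gcdn_gt0 d0.
have xe : x = e %[mod g].
  apply: sqf_crt => //.
  - apply: sqf_dvd sb. exact: dvdn_gcdr.
  - move=> l pl lg. apply: H => //. exact: dvdn_trans lg (dvdn_gcdl _ _).
    exact: dvdn_trans lg (dvdn_gcdr _ _).
have gb : g %| b by exact: dvdn_gcdr.
have xle : x <= e + b * x by nia.
have Hm : e + b * x = x %[mod g].
  by rewrite xe -(divnK gb) mulnAC addnC modnMDl.
move/eqP: Hm; rewrite eqn_mod_dvd // => /dvdnP [k hk].
case: (@egcdnP d b d0) => km kn H1 _.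
exists (km * k), (x + kn * k).
have H3 : e + b*x = x + k*g by lia.
have H4 : d*(km*k) = kn*b*k + g*k by rewrite mulnA [d*km]mulnC H1 mulnDl.
lia.
Qed.

Lemma progr_sub a b e : progr a b e -> forall y, progr e b y -> progr a b y.
Proof. move=> [n0 ->] y [n ->]. exists (n0 + n). by rewrite mulnDr addnA. Qed.

Lemma progr_dvd x b L : b %| L -> forall y, progr x L y -> progr x b y.
Proof. move=> /dvdnP [k ->] y [n ->]. exists (k * n). by rewrite mulnA [b * k]mulnC. Qed.

Lemma progr_cop a b e : coprime a b -> progr a b e -> coprime e b.
Proof. move=> c [n ->]. by rewrite /coprime gcdnC addnC mulnC gcdnMDl gcdnC. Qed.

Lemma progr_mod a b e l : l %| b -> progr a b e -> e = a %[mod l].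
Proof. move=> /dvdnP [k ->] [n ->]. by rewrite -mulnA mulnC addnC -mulnA mulnC modnMDl. Qed.

Lemma basic_open a b : basic_set a b -> kopen (progr a b).
Proof.
move=> [a0 [b0 [c s]]]; split.
  move=> x [n ->]. rewrite /Npos. lia.
move=> x px. exists a, b. by split.
Qed.

Lemma basic_prime t q : 0 < t -> prime q -> ~~ (q %| t) -> basic_set t q.
Proof.
move=> t0 pq qt. split=> //; split; first exact: prime_gt0.
split; last exact: sqf_prime.
by rewrite coprime_sym prime_coprime.
Qed.

Lemma basic_one x : 0 < x -> basic_set x 1.
Proof. move=> x0; split=> //; split=> //; split; [exact: coprimen1 | exact: sqf1]. Qed.

Lemma kcl_mono U V : (forall x, U x -> V x) -> forall y, kclosure U y -> kclosure V y.
Proof.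
move=> UV y [y0 H]; split=> // W oW Wy. have [z [Wz Uz]] := H W oW Wy. exists z; split=> //; exact: UV.
Qed.

Lemma cl_of_progr t e b : 0 < t -> 0 < b -> squarefree b ->
  (forall l, prime l -> l %| b -> ~~ (l %| t) -> t = e %[mod l]) ->
  kclosure (progr e b) t.
Proof.
move=> t0 b0 sb H; split=> // V [Vpos oV] Vt.
have [a' [d [[a0 [d0 [cad sd]]] [pt sub]]]] := oV t Vt.
have ctd : coprime t d := progr_cop cad pt.
have [n1 [n2 E]] : exists n1 n2, t + d * n1 = e + b * n2.
  apply: crt2 => // l pl ld lb. apply: H => //.
  apply/negP => lt. have : l %| gcdn t d by rewrite dvdn_gcd lt ld.
  rewrite (eqP ctd) dvdn1 => /eqP l1. by rewrite l1 in pl.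
exists (t + d * n1); split.
  apply: sub. apply: (progr_sub pt). by exists n1.
by exists n2.
Qed.

Lemma cl_nec e b t l : kclosure (progr e b) t -> prime l -> l %| b -> ~~ (l %| t) ->
  t = e %[mod l].
Proof.
move=> [t0 H] pl lb lt.
have pt : progr t l t by exists 0; rewrite muln0 addn0.
have [y [[n1 ->] py]] := H _ (basic_open (basic_prime t0 pl lt)) pt.
rewrite -(progr_mod lb py). by rewrite addnC mulnC modnMDl.
Qed.

Lemma kopen_ext U V : (forall x, U x <-> V x) -> kopen U -> kopen V.
Proof.
move=> UV [P O]; split; first by move=> x /UV /P.
move=> x /UV Ux. have [a [b [H1 [H2 H3]]]] := O x Ux.
exists a, b; split=> //; split=> // y py. apply/UV. exact: H3.
Qed.

Definition posl (E : seq nat) := forall x, x \in E -> 0 < x.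
Definition prec (E E' : seq nat) := forall B, FE E B -> FE E' B.

Lemma FE_up E A B : FE E A -> (forall x, B x -> 0 < x) ->
  (forall y, 0 < y -> A y -> B y) -> FE E B.
Proof.
move=> [_ [Us [H1 H2]]] Bp AB; split=> //. exists Us; split=> // y y0 Hy.
apply: AB => //. exact: H2.
Qed.

Lemma FE_pos E : posl E -> FE E (fun y => 0 < y).
Proof.
move=> pE; split=> //. exists (fun x => progr x 1); split=> // x xE.
split; first exact/basic_open/basic_one/pE.
by exists 0; rewrite muln0 addn0.
Qed.

Lemma open_cap U1 U2 : kopen U1 -> kopen U2 -> kopen (fun x => U1 x /\ U2 x).
Proof.
move=> [P1 O1] [P2 O2]; split; first by move=> x [] /P1.
move=> x [x1 x2].
have [a1 [b1 [[a10 [b10 [c1 s1]]] [p1 sub1]]]] := O1 x x1.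
have [a2 [b2 [[a20 [b20 [c2 s2]]] [p2 sub2]]]] := O2 x x2.
set c := b2 %/ gcdn b2 b1.
have c0 : 0 < c by exact: divg_gt0.
have cb2 : c %| b2 by apply: dvdn_div; exact: dvdn_gcdl.
have b2L : b2 %| b1 * c.
  rewrite -{1}(divnK (dvdn_gcdl b2 b1)) -/c mulnC. apply: dvdn_mul => //. exact: dvdn_gcdr.
exists x, (b1 * c); split.
  split; first exact: P1.
  split; first by rewrite muln_gt0 b10 c0.
  split.
    rewrite coprimeMr (progr_cop c1 p1) /=. apply: coprime_dvdr cb2 _. exact: progr_cop c2 p2.
  apply: sqf_mul => //; first exact: sqf_dvd cb2 s2.
  exact: cop_div.
split; first by exists 0; rewrite muln0 addn0.
move=> y py; split.
  apply: sub1. apply: (progr_sub p1). apply: progr_dvd py. exact: dvdn_mulr.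
apply: sub2. apply: (progr_sub p2). exact: progr_dvd py.
Qed.

Lemma FE_cap E A1 A2 : FE E A1 -> FE E A2 -> FE E (fun y => A1 y /\ A2 y).
Proof.
move=> [P1 [U1 [H1 K1]]] [P2 [U2 [H2 K2]]]; split; first by move=> x [] /P1.
exists (fun x y => U1 x y /\ U2 x y); split.
  move=> x xE. have [o1 u1] := H1 x xE. have [o2 u2] := H2 x xE.
  split; [exact: open_cap | by split].
move=> y y0 Hy; split.
  apply: K1 => // x xE. apply: kcl_mono (Hy x xE). by move=> z [].
apply: K2 => // x xE. apply: kcl_mono (Hy x xE). by move=> z [].
Qed.

Lemma prec_mem e E : posl E -> e \in E -> prec [:: e] E.
Proof.
move=> pE eE B [Bp [Us [H1 H2]]]; split=> //.
exists (fun x => if x == e then Us e else progr x 1); split.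
  move=> x xE. case: eqP => [->|_]; first by apply: H1; rewrite inE.
  split; first exact/basic_open/basic_one/pE.
  by exists 0; rewrite muln0 addn0.
move=> y y0 Hy. apply: H2 => // x; rewrite inE => /eqP ->.
by have := Hy e eE; rewrite eqxx.
Qed.

Lemma prec_join (E E' : seq nat) : posl E' -> (forall e, e \in E -> prec [:: e] E') -> prec E E'.
Proof.
move=> pE' H B [Bp [Us [H1 H2]]].
have main : forall s : seq nat, {subset s <= E} ->
   FE E' (fun y => 0 < y /\ forall e, e \in s -> kclosure (Us e) y).
  elim=> [|e s IH] sE.
    apply: FE_up (FE_pos pE') _ _; first by move=> x [].
    by move=> y y0 _; split.
  have eE : e \in E by apply: sE; rewrite inE eqxx.
  have F1 : FE E' (kclosure (Us e)).
    apply: (H e eE). split; first by move=> x [].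
    exists Us; split; first by move=> x; rewrite inE => /eqP ->; apply: H1.
    move=> y y0 Hy. apply: Hy. by rewrite inE.
  have F2 : FE E' _ := IH (fun x xs => sE x (ltac:(by rewrite inE xs orbT))).
  apply: FE_up (FE_cap F1 F2) _ _; first by move=> x [].
  move=> y y0 [c [_ Hc]]; split=> // x; rewrite inE => /orP [/eqP -> //|]. exact: Hc.
apply: FE_up (main E (fun x h => h)) Bp _.
move=> y y0 [_ Hy]. exact: H2.
Qed.

Lemma FE_pull h E B : khomeo h -> posl E -> FE (map h E) B ->
  FE E (fun x => 0 < x /\ B (h x)).
Proof.
move=> [hp [hi [hs [ho hc]]]] pE [Bp [Us [H1 H2]]]; split; first by move=> x [].
exists (fun x v => 0 < v /\ Us (h x) (h v)); split.
  move=> x xE. have [o u] := H1 (h x) (map_f h xE).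
  split; first exact: hc. by split; [exact: pE|].
move=> y y0 Hy; split=> //. apply: H2; first exact: hp.
move=> x' /mapP [x xE ->]. have [_ K] := Hy x xE. split; first exact: hp.
move=> V oV Vhy.
have [z [[z0 Vz] [_ Uz]]] := K _ (hc V oV) (conj y0 Vhy).
by exists (h z).
Qed.

Definition invh h g := khomeo h /\ khomeo g /\ (forall y, 0 < y -> h (g y) = y) /\
  (forall x, 0 < x -> g (h x) = x).

Lemma invh_sym h g : invh h g -> invh g h.
Proof. by move=> [a [b [c d]]]. Qed.

Lemma posl_map h E : khomeo h -> posl E -> posl (map h E).
Proof. move=> [hp _] pE x /mapP [y yE ->]. exact/hp/pE. Qed.

Lemma map_gh h g E : invh h g -> posl E -> map g (map h E) = E.
Proof.
move=> [_ [_ [_ gh]]] pE. rewrite -map_comp -[RHS]map_id. apply/eq_in_map => x xE /=.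
exact/gh/pE.
Qed.

Lemma prec_map h g E E' : invh h g -> posl E -> posl E' -> prec E E' ->
  prec (map h E) (map h E').
Proof.
move=> ihg pE pE' P B FB.
have [kh [kg [hg gh]]] := ihg.
have F1 := P _ (FE_pull kh pE FB).
rewrite -(map_gh ihg pE') in F1.
have F2 := FE_pull kg (posl_map kh pE') F1.
apply: FE_up F2 (proj1 FB) _. move=> y y0 [_ [_]]. by rewrite hg.
Qed.

Lemma prec_map_iff h g E E' : invh h g -> posl E -> posl E' ->
  prec (map h E) (map h E') <-> prec E E'.
Proof.
move=> ihg pE pE'; split; last exact: (prec_map ihg pE pE').
have kh := proj1 ihg.
move=> P. have := prec_map (invh_sym ihg) (posl_map kh pE) (posl_map kh pE') P.
by rewrite !(map_gh ihg).
Qed.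

Lemma cop_notdvd x b l : coprime x b -> prime l -> l %| b -> ~~ (l %| x).
Proof.
move=> c pl lb. apply/negP => lx. have : l %| gcdn x b by rewrite dvdn_gcd lx lb.
rewrite (eqP c) dvdn1 => /eqP l1. by rewrite l1 in pl.
Qed.

Lemma prec_nec z (E : seq nat) q u : prec [:: z] E -> 0 < z -> prime q -> ~~ (q %| z) ->
  ~~ (q %| u) -> (forall e, e \in E -> q %| e \/ u = e %[mod q]) -> u = z %[mod q].
Proof.
move=> P z0 pq qz qu Hu.
have F0 : FE [:: z] (kclosure (progr z q)).
  split; first by move=> x [].
  exists (fun _ => progr z q); split.
    move=> x; rewrite inE => /eqP ->. split; first exact/basic_open/basic_prime.
    by exists 0; rewrite muln0 addn0.
  move=> y y0 Hy. apply: Hy. by rewrite inE.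
have [_ [Us [H1 H2]]] := P _ F0.
have main : forall s : seq nat, {subset s <= E} -> exists M, 0 < M /\ coprime q M /\
   forall e, e \in s -> exists a b, basic_set a b /\ progr a b e /\
     (forall y, progr a b y -> Us e y) /\ (forall l, prime l -> l %| b -> l != q -> l %| M).
  elim=> [|e s IH] sE.
    exists 1; split=> //; split; first exact: coprimen1. by [].
  have [M [M0 [cM HM]]] := IH (fun x xs => sE x (ltac:(by rewrite inE xs orbT))).
  have eE : e \in E by apply: sE; rewrite inE eqxx.
  have [oU Ue] := H1 e eE.
  have [a [b [[a0 [b0 [cab sb]]] [pe sub]]]] := (proj2 oU) e Ue.
  set c := b %/ gcdn b q.
  exists (c * M); split; first by rewrite muln_gt0 M0 divg_gt0.
  split; first by rewrite coprimeMr cM cop_div.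
  move=> x; rewrite inE => /orP [/eqP ->|xs].
    exists a, b; split=> //; split=> //; split=> // l pl lb lq.
    apply: dvdn_mulr. apply: dvd_div_notdvd => //. by rewrite dvdn_prime2.
  have [a' [b' [H3 [H4 [H5 H6]]]]] := HM x xs.
  exists a', b'; split=> //; split=> //; split=> // l pl lb lq.
  apply: dvdn_mull. exact: H6.
have [M [M0 [cM HM]]] := main E (fun x h => h).
set t := chinese q M u 0.
have tq : t = u %[mod q] by exact: chinese_modl.
have Mt : M %| t by rewrite /dvdn /t chinese_modr // mod0n.
have qt : ~~ (q %| t) by rewrite /dvdn tq.
have t0 : 0 < t by case: (posnP t) qt => // ->; rewrite dvdn0.
have Ct : kclosure (progr z q) t.
  apply: H2 => // e eE.
  have [a [b [[a0 [b0 [cab sb]]] [pe [sub Hl]]]]] := HM e eE.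
  apply: kcl_mono (fun y py => sub y (progr_sub pe py)) _ _.
  apply: cl_of_progr => // l pl lb lt.
  case: (eqVneq l q) => [el|lq]; last by move: lt; rewrite (dvdn_trans (Hl l pl lb lq) Mt).
  subst l. have ce := progr_cop cab pe.
  have qe := cop_notdvd ce pq lb.
  case: (Hu e eE) => [qe'|ue]; first by rewrite qe' in qe. by rewrite tq.
have := cl_nec Ct pq (dvdnn q) qt. by rewrite tq.
Qed.

Lemma prec_suff z (E : seq nat) : 0 < z -> posl E ->
  (forall q, prime q -> odd q -> ~~ (q %| z) -> forall u, ~~ (q %| u) ->
     (forall e, e \in E -> q %| e \/ u = e %[mod q]) -> u = z %[mod q]) ->
  prec [:: z] E.
Proof.
move=> z0 pE H B [Bp [Us [H1 H2]]].
have [oU Uz] := H1 z (mem_head _ _).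
have [a [b [[a0 [b0 [cab sb]]] [pz sub]]]] := (proj2 oU) z Uz.
have czb := progr_cop cab pz.
split=> //. exists (fun e => progr e (b %/ gcdn b e)); split.
  move=> e eE. split; last by exists 0; rewrite muln0 addn0.
  apply: basic_open. split; first exact: pE.
  split; first exact: divg_gt0.
  split; first exact: cop_div.
  apply: sqf_dvd sb. apply: dvdn_div. exact: dvdn_gcdl.
move=> y y0 Hy. apply: H2 => // x; rewrite inE => /eqP ->.
apply: kcl_mono (fun w pw => sub w (progr_sub pz pw)) _ _.
apply: cl_of_progr => // l pl lb ly.
have lz := cop_notdvd czb pl lb.
case: (even_prime pl) => [el|ol].
  subst l. move: ly lz. rewrite /dvdn !modn2. by case: (odd y); case: (odd z).
have HH := H l pl ol lz y ly. apply: HH => e eE.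
have [le|le] := boolP (l %| e); first by left.
right. exact: (cl_nec (Hy e eE) pl (dvd_div_notdvd b0 pl lb le) ly).
Qed.

Fixpoint prodl (s : seq nat) : nat := if s is x :: s' then x * prodl s' else 1.

Lemma prodl_gt0 s : (forall q, q \in s -> prime q /\ odd q) -> 0 < prodl s.
Proof.
elim: s => [|x s IH] //= H. rewrite muln_gt0 prime_gt0 ?IH //.
  by move=> q qs; apply: H; rewrite inE qs orbT.
by case: (H x (mem_head _ _)).
Qed.

Lemma prodl_dvd s r : r \in s -> r %| prodl s.
Proof.
elim: s => [|x s IH] //=. rewrite inE => /orP [/eqP ->|rs]; first exact: dvdn_mulr.
apply: dvdn_mull. exact: IH.
Qed.

Lemma prodl_ndvd s q : prime q -> q \notin s -> (forall r, r \in s -> prime r) -> ~~ (q %| prodl s).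
Proof.
move=> pq; elim: s => [|x s IH] /=; first by rewrite dvdn1; case: eqP pq => // ->.
rewrite inE negb_or => /andP [qx qs] H.
rewrite Euclid_dvdM // negb_or IH ?andbT; last by move=> r rs; apply: H; rewrite inE rs orbT.
  by rewrite dvdn_prime2 //; apply: H; rewrite inE eqxx.
by [].
Qed.

Lemma mod_addM w k M r : r %| M -> (w + k * M) %% r = w %% r.
Proof. move=> /dvdnP [c ->]. by rewrite addnC mulnA modnMDl. Qed.

Lemma pick3 (a0 a1 a2 c : nat) : a0 <> a1 -> a1 <> a2 -> a0 <> a2 ->
  (a0 <> 0 /\ a0 <> c) \/ (a1 <> 0 /\ a1 <> c) \/ (a2 <> 0 /\ a2 <> c).
Proof. lia. Qed.

Lemma W (s : seq nat) (f : nat -> nat) : uniq s -> (forall q, q \in s -> prime q /\ odd q) ->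
  exists w, 0 < w /\ forall q, q \in s -> ~~ (q %| w) /\ w %% q != f q %% q.
Proof.
elim: s => [|q s IH] /=.
  move=> _ _. by exists 1.
move=> /andP [qs us] H.
have Hs : forall r, r \in s -> prime r /\ odd r by move=> r rs; apply: H; rewrite inE rs orbT.
have [w [w0 Hw]] := IH us Hs.
have [pq oq] := H q (mem_head _ _).
set M := prodl s.
have qM : ~~ (q %| M) by apply: prodl_ndvd => // r /Hs [].
have keep : forall k r, r \in s -> ~~ (r %| w + k * M) /\ (w + k * M) %% r != f r %% r.
  move=> k r rs. rewrite /dvdn mod_addM ?prodl_dvd //. exact: Hw.
set a0 := w %% q. set a1 := (w + 1 * M) %% q. set a2 := (w + 2 * M) %% q. set c := f q %% q.
have d01 : a0 != a1.
  rewrite /a0 /a1 -{1}(addn0 w) mul1n. apply/negP => /eqP /eqP.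
  rewrite eqn_modDl mod0n eq_sym => h. by rewrite /dvdn h in qM.
have d12 : a1 != a2.
  rewrite /a1 /a2 mul1n -(addn0 (w + M)) mulSn mul1n addnA. apply/negP => /eqP /eqP.
  rewrite eqn_modDl mod0n eq_sym => h. by rewrite /dvdn h in qM.
have d02 : a0 != a2.
  rewrite /a0 /a2 -{1}(addn0 w). apply/negP => /eqP /eqP.
  rewrite eqn_modDl mod0n eq_sym => h. move: h; rewrite -/(dvdn q (2 * M)) Euclid_dvdM //.
  rewrite (negbTE qM) orbF dvdn_prime2 //. by move/eqP => e2; rewrite e2 in oq.
have good : exists k, 0 < w + k * M /\ (w + k * M) %% q != 0 /\ (w + k * M) %% q != c.
  have := @pick3 a0 a1 a2 c (elimN eqP d01) (elimN eqP d12) (elimN eqP d02).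
  move=> [[h0 hc]|[[h0 hc]|[h0 hc]]].
  - exists 0; rewrite mul0n addn0 w0; split=> //. by split; apply/eqP.
  - exists 1; rewrite addn_gt0 w0; split=> //. by split; apply/eqP.
  - exists 2; rewrite addn_gt0 w0; split=> //. by split; apply/eqP.
have [k [pos [n0 nc]]] := good.
exists (w + k * M); split=> // r; rewrite inE => /orP [/eqP ->|rs]; last exact: keep.
by rewrite /dvdn n0.
Qed.

Lemma mod_double q x : x = 2 * x %[mod q] -> q %| x.
Proof.
move/eqP. rewrite mul2n -addnn -{1}(addn0 x) eqn_modDl mod0n eq_sym. by [].
Qed.

Lemma ndvd2 q x : prime q -> odd q -> ~~ (q %| x) -> ~~ (q %| 2 * x).
Proof.
move=> pq oq qx. rewrite Euclid_dvdM // negb_or qx andbT dvdn_prime2 //.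
by apply/eqP => e; rewrite e in oq.
Qed.

Lemma posl2 p : 0 < p -> posl [:: p; 2 * p].
Proof. move=> p0 x; rewrite !inE => /orP [/eqP ->|/eqP ->] //; lia. Qed.

Lemma A1suff p z : prime p -> odd p -> 0 < z -> p %| z -> prec [:: z] [:: p; 2 * p].
Proof.
move=> pp op z0 pz. apply: prec_suff => //; first exact/posl2/prime_gt0.
move=> q pq oq qz u qu Hu. exfalso.
have qp : ~~ (q %| p).
  rewrite dvdn_prime2 //. apply/eqP => e; subst q. by rewrite pz in qz.
have q2p := ndvd2 pq oq qp.
have [h1|h1] := Hu p (mem_head _ _); first by rewrite h1 in qp.
have [h2|h2] := Hu (2 * p) (ltac:(by rewrite !inE eqxx orbT)); first by rewrite h2 in q2p.
have : p = 2 * p %[mod q] by rewrite -h1 -h2.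
move/mod_double. by rewrite (negbTE qp).
Qed.

Lemma nec_all r (E : seq nat) z : prime r -> odd r -> (forall e, e \in E -> r %| e) ->
  0 < z -> prec [:: z] E -> r %| z.
Proof.
move=> pr or He z0 P. apply: contraT => rz.
have := prec_nec P z0 pr rz (ndvd2 pr or rz) (fun e eE => or_introl (He e eE)).
move/esym/mod_double. by rewrite (negbTE rz).
Qed.

Lemma A2 p c : prime p -> odd p -> 0 < c -> ~~ (p %| c) -> ~ prec [:: 2 * c] [:: p; 2 * p; c].
Proof.
move=> pp op c0 pc P.
have H : forall e, e \in [:: p; 2 * p; c] -> p %| e \/ c = e %[mod p].
  move=> e; rewrite !inE => /orP [/eqP ->|/orP [/eqP ->|/eqP ->]].
  - by left.
  - left; exact: dvdn_mull.
  - by right.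
have := prec_nec P (ltac:(lia)) pp (ndvd2 pp op pc) pc H.
move/mod_double. by rewrite (negbTE pc).
Qed.

Lemma span x y : 0 < x -> 0 < y -> x != y ->
  (forall r, prime r -> odd r -> ~ (r %| x /\ r %| y)) ->
  exists w, 0 < w /\ forall z, 0 < z -> prec [:: z] [:: x; y; w].
Proof.
move=> x0 y0 xy Hc.
have dl0 : 0 < (x - y) + (y - x) by case: (ltngtP x y) xy => //; lia.
set dl := (x - y) + (y - x).
set D := x * y * dl.
have D0 : 0 < D by rewrite /D !muln_gt0 x0 y0 dl0.
set s := filter odd (primes D).
have [w [w0 Hw]] := @W s (fun q => if q %| x then y else x)
  (filter_uniq _ (primes_uniq D)) (ltac:(move=> q; rewrite mem_filter mem_primes => /andP [oq /and3P [pq _ _]]; by split)).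
exists w; split=> // z z0.
apply: prec_suff => //.
  move=> e; rewrite !inE => /orP [/eqP ->|/orP [/eqP ->|/eqP ->]] //.
move=> q pq oq qz u qu Hu. exfalso.
have hx := Hu x (ltac:(by rewrite !inE eqxx)).
have hy := Hu y (ltac:(by rewrite !inE eqxx orbT)).
have hw := Hu w (ltac:(by rewrite !inE eqxx !orbT)).
case: (boolP (q %| D)) => qD.
  have qs : q \in s by rewrite mem_filter oq mem_primes pq D0 qD.
  have [qw wf] := Hw q qs.
  have uw : u = w %[mod q] by case: hw => // h; rewrite h in qw.
  case: (boolP (q %| x)) => qx.
    have qy : ~~ (q %| y) by apply/negP => qy; apply: (Hc q pq oq).
    have uy : u = y %[mod q] by case: hy => // h; rewrite h in qy.
    by move: wf; rewrite qx -uw uy eqxx.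
  have ux : u = x %[mod q] by case: hx => // h; rewrite h in qx.
  by move: wf; rewrite (negbTE qx) -uw ux eqxx.
have qx : ~~ (q %| x) by apply: contra qD => h; rewrite /D -mulnA dvdn_mulr.
have qy : ~~ (q %| y) by apply: contra qD => h; rewrite /D mulnAC dvdn_mull.
have ux : u = x %[mod q] by case: hx => // h; rewrite h in qx.
have uy : u = y %[mod q] by case: hy => // h; rewrite h in qy.
have qdl : q %| dl.
  rewrite /dl. case: (leqP x y) => le.
    have : y == x %[mod q] by rewrite -ux -uy.
    rewrite eqn_mod_dvd // => h. have -> : x - y = 0 by apply/eqP; rewrite subn_eq0. by rewrite add0n.
  have : x == y %[mod q] by rewrite -ux -uy.
  rewrite eqn_mod_dvd; last exact: ltnW. move=> h. have -> : y - x = 0 by apply/eqP; rewrite subn_eq0; exact: ltnW. by rewrite addn0.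
by move: qD; rewrite /D dvdn_mull.
Qed.

Lemma posl1 a : 0 < a -> posl [:: a].
Proof. by move=> a0 x; rewrite inE => /eqP ->. Qed.

Lemma posl3 a b c : 0 < a -> 0 < b -> 0 < c -> posl [:: a; b; c].
Proof. by move=> a0 b0 c0 x; rewrite !inE => /orP [/eqP ->|/orP [/eqP ->|/eqP ->]]. Qed.

Lemma tr1 h g a L : invh h g -> 0 < a -> posl L -> prec [:: a] L -> prec [:: h a] (map h L).
Proof. move=> ihg a0 pL P. exact: (prec_map ihg (posl1 a0) pL P). Qed.

Lemma tr1_back h g a L : invh h g -> 0 < a -> posl L -> prec [:: h a] (map h L) -> prec [:: a] L.
Proof. move=> ihg a0 pL P. exact: ((prec_map_iff ihg (posl1 a0) pL).1 P). Qed.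

Lemma prec_trans E1 E2 E3 : prec E1 E2 -> prec E2 E3 -> prec E1 E3.
Proof. move=> P Q B F. exact/Q/P. Qed.

Lemma step1 h g p : invh h g -> prime p -> odd p ->
  exists r, [/\ prime r, odd r & forall v, 0 < v -> p %| v -> r %| h v].
Proof.
move=> ihg pp op.
have [[hp [hi [hs _]]] [[gp _] [hg gh]]] := ihg.
have p0 := prime_gt0 pp.
have p20 : 0 < 2 * p by lia.
set x := h p. set y := h (2 * p).
have x0 : 0 < x := hp _ p0. have y0 : 0 < y := hp _ p20.
have pE := posl2 p0.
case: (classic (exists r, [/\ prime r, odd r, r %| x & r %| y])) => [[r [pr or rx ry]]|nr].
  exists r; split=> // v v0 pv.
  have := tr1 ihg v0 pE (A1suff pp op v0 pv) => /= P.
  apply: (nec_all pr or _ (hp _ v0) P) => e; rewrite !inE => /orP [/eqP ->|/eqP ->] //.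
exfalso.
have xy : x != y.
  apply/eqP => e. have := hi _ _ p0 p20 e. lia.
have Hc : forall r, prime r -> odd r -> ~ (r %| x /\ r %| y).
  move=> r pr or [rx ry]. apply: nr. by exists r.
have [w [w0 Hw]] := span x0 y0 xy Hc.
set c := g w. have c0 : 0 < c := gp _ w0. have hc : h c = w := hg _ w0.
have pc : ~~ (p %| c).
  apply/negP => pc.
  have Pw : prec [:: w] [:: x; y].
    rewrite -hc. exact: (tr1 ihg c0 pE (A1suff pp op c0 pc)).
  have pxy : posl [:: x; y] by move=> e; rewrite !inE => /orP [/eqP ->|/eqP ->].
  have J : prec [:: x; y; w] [:: x; y].
    apply: prec_join => // e; rewrite !inE => /orP [/eqP ->|/orP [/eqP ->|/eqP ->]] //;
      apply: prec_mem => //; by rewrite !inE eqxx ?orbT.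
  have P1 : prec [:: h 1] [:: x; y] := prec_trans (Hw _ (hp _ (ltn0Sn 0))) J.
  have P2 := tr1_back ihg (ltn0Sn 0) pE P1.
  have He : forall e, e \in [:: p; 2 * p] -> p %| e.
    move=> e; rewrite !inE => /orP [/eqP ->|/eqP ->] //; exact: dvdn_mull.
  have := nec_all pp op He (ltn0Sn 0) P2.
  rewrite dvdn1 => /eqP e1. by rewrite e1 in pp.
have c20 : 0 < 2 * c by lia.
have P : prec [:: h (2 * c)] (map h [:: p; 2 * p; c]) by rewrite /= -/x -/y hc; exact: (Hw _ (hp _ c20)).
have := tr1_back ihg c20 (posl3 p0 p20 c0) P.
exact: A2 pp op c0 pc.
Qed.

Lemma step2 h g p : invh h g -> prime p -> odd p ->
  exists r, [/\ prime r, odd r & forall v, 0 < v -> (p %| v <-> r %| h v)].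
Proof.
move=> ihg pp op.
have [[hp _] [[gp _] [hg gh]]] := ihg.
have [r [pr or Hr]] := step1 ihg pp op.
have [s [ps os Hs]] := step1 (invh_sym ihg) pr or.
have sp : s = p.
  have := Hs (h p) (hp _ (prime_gt0 pp)) (Hr p (prime_gt0 pp) (dvdnn p)).
  rewrite gh ?prime_gt0 // dvdn_prime2 //. by move/eqP.
subst s.
exists r; split=> // v v0; split; first exact: Hr.
move=> rv. have := Hs (h v) (hp _ v0) rv. by rewrite gh.
Qed.

Lemma step3 h g p r : invh h g -> prime p -> odd p -> prime r -> odd r ->
  (forall v, 0 < v -> (p %| v <-> r %| h v)) -> r <= p.
Proof.
move=> ihg pp op pr or H.
have [[hp [hi [hs _]]] [[gp _] [hg gh]]] := ihg.
have p0 := prime_gt0 pp. have r0 := prime_gt0 pr.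
have p20 : 0 < 2 * p by lia.
set s := iota 1 r.-1.
have Hd : forall d, d \in s -> [/\ 0 < d, d < r, ~~ (r %| d), 0 < g d & ~~ (p %| g d)].
  move=> d; rewrite mem_iota => /andP [d1 d2].
  have dr : d < r by lia.
  have rd : ~~ (r %| d) by apply/negP => /(dvdn_leq d1); lia.
  have gd0 := gp _ d1.
  split=> //. apply/negP => /(H _ gd0). by rewrite hg // (negbTE rd).
set F := fun d => g d %% p.
have inj : {in s &, injective F}.
  move=> d d' ds d's Fdd.
  have [d0 dr rd gd0 pgd] := Hd d ds.
  have [d'0 d'r rd' gd'0 pgd'] := Hd d' d's.
  set c := g d in Fdd gd0 pgd. set c' := g d' in Fdd gd'0 pgd'.
  have Q1 : prec [:: c'] [:: p; 2 * p; c].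
    apply: prec_suff => //; first exact: posl3.
    move=> q pq oq qc' u qu Hu.
    case: (eqVneq q p) => [eq|nq].
      subst q. case: (Hu c (ltac:(by rewrite !inE eqxx !orbT))) => [pc|uc].
        by rewrite pc in pgd.
      by rewrite uc.
    exfalso.
    have qp : ~~ (q %| p) by rewrite dvdn_prime2 // nq.
    have q2p := ndvd2 pq oq qp.
    have [h1|h1] := Hu p (mem_head _ _); first by rewrite h1 in qp.
    have [h2|h2] := Hu (2 * p) (ltac:(by rewrite !inE eqxx orbT)); first by rewrite h2 in q2p.
    have : p = 2 * p %[mod q] by rewrite -h1 -h2.
    move/mod_double. by rewrite (negbTE qp).
  have Q2 : prec [:: p; 2 * p; c'] [:: p; 2 * p; c].
    apply: prec_join; first exact: posl3.
    move=> e; rewrite !inE => /orP [/eqP ->|/orP [/eqP ->|/eqP ->]] //.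
    - apply: prec_mem; [exact: posl3 | by rewrite inE eqxx].
    - apply: prec_mem; [exact: posl3 | by rewrite !inE eqxx orbT].
  have Q3 := prec_map ihg (posl3 p0 p20 gd'0) (posl3 p0 p20 gd0) Q2.
  rewrite /= /c /c' !hg // in Q3.
  have hp0 := hp _ p0. have h2p0 := hp _ p20.
  have Q4 : prec [:: d'] [:: h p; h (2 * p); d'].
    apply: prec_mem; [exact: posl3 | by rewrite !inE eqxx !orbT].
  have Q5 := prec_trans Q4 Q3.
  have Hu : forall e, e \in [:: h p; h (2 * p); d] -> r %| e \/ d = e %[mod r].
    move=> e; rewrite !inE => /orP [/eqP ->|/orP [/eqP ->|/eqP ->]].
    - left. by apply/H => //.
    - left. apply/H => //. exact: dvdn_mull.
    - by right.
  have := prec_nec Q5 d'0 pr rd' rd Hu.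
  by rewrite !modn_small.
have U : uniq (map F s) by rewrite map_inj_in_uniq // iota_uniq.
have S : {subset map F s <= iota 1 p.-1}.
  move=> x /mapP [d ds ->]. have [_ _ _ _ pgd] := Hd d ds.
  rewrite mem_iota /F. have := ltn_pmod (g d) p0.
  have : g d %% p != 0 by [].
  lia.
have := uniq_leq_size U S. rewrite size_map !size_iota. lia.
Qed.

Lemma inv_exists h : khomeo h -> exists g, invh h g.
Proof.
move=> kh. have [hp [hi [hs [ho hc]]]] := kh.
have ex : forall y, exists x, (y == 0) || ((0 < x) && (h x == y)).
  move=> y. case: (posnP y) => [->|y0]; first by exists 0.
  have [x [x0 hx]] := hs y y0. exists x. by rewrite x0 hx eqxx orbT.
set g := fun y => xchoose (ex y).
have Hg : forall y, 0 < y -> 0 < g y /\ h (g y) = y.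
  move=> y y0. have := xchooseP (ex y). rewrite -/(g y).
  case: eqP y0 => [-> //|_ _] /= /andP [a /eqP b]. by split.
have hg : forall y, 0 < y -> h (g y) = y by move=> y /Hg [].
have gh : forall x, 0 < x -> g (h x) = x.
  move=> x x0. have [a b] := Hg _ (hp _ x0). exact: hi.
exists g; split=> //; split=> //.
split; first by move=> y /Hg [].
split.
  move=> x y x0 y0 e. by rewrite -(hg x x0) -(hg y y0) e.
split.
  move=> x x0. exists (h x); split; [exact: hp | exact: gh].
split.
  move=> U oU. apply: kopen_ext (hc U oU).
  move=> y; split.
    move=> [y0 Uy]. exists (h y); split=> //. exact: gh.
  move=> [x [Ux <-]]. have x0 := proj1 oU x Ux.
  split; first exact: (proj1 (Hg x x0)). by rewrite hg.
move=> V oV. apply: kopen_ext (ho V oV).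
move=> x; split.
  move=> [v [Vv <-]]. have v0 := proj1 oV v Vv. split; [exact: hp | by rewrite gh].
move=> [x0 Vx]. exists (g x); split=> //. exact: hg.
Qed.

Unset Implicit Arguments.

Theorem lemma3p13 (h : nat -> nat) (p : nat) :
  khomeo h -> prime p -> odd p ->
  forall B : nat -> Prop, push_family h (FE [:: p; 2 * p]) B <-> FE [:: p; 2 * p] B.
Proof.
move=> kh pp op.
have [g ihg] := inv_exists kh.
have [[hp [hi [hs _]]] [[gp _] [hg gh]]] := ihg.
have p0 := prime_gt0 pp. have p20 : 0 < 2 * p by lia.
have [r [pr or H]] := step2 ihg pp op.
have rp : r <= p := step3 ihg pp op pr or H.
have H' : forall v, 0 < v -> (r %| v <-> p %| g v).
  move=> v v0. rewrite (H _ (gp _ v0)) hg //.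
have pr' : p <= r := step3 (invh_sym ihg) pr or pp op H'.
have erp : r = p by apply/eqP; rewrite eqn_leq rp pr'.
subst r.
set x := h p. set y := h (2 * p).
have x0 : 0 < x := hp _ p0. have y0 : 0 < y := hp _ p20.
have pE := posl2 p0.
have pxy : posl [:: x; y] by move=> e; rewrite !inE => /orP [/eqP ->|/eqP ->].
have Pa : prec [:: x; y] [:: p; 2 * p].
  apply: prec_join => // e; rewrite !inE => /orP [/eqP ->|/eqP ->].
  - apply: A1suff => //. rewrite /x. by apply/(H p p0).
  - apply: A1suff => //. rewrite /y. apply/(H _ p20). exact: dvdn_mull.
have Pb : prec [:: p; 2 * p] [:: x; y].
  apply: prec_join => // e; rewrite !inE => /orP [/eqP ->|/eqP ->].
  - have gp0 := gp _ p0.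
    have := tr1 ihg gp0 pE (A1suff pp op gp0 (ltac:(by apply/(H' p p0)))).
    by rewrite hg.
  - have gp0 := gp _ p20.
    have := tr1 ihg gp0 pE (A1suff pp op gp0 (ltac:(apply/(H' _ p20); exact: dvdn_mull))).
    by rewrite hg.
move=> B; split.
  move=> [A [FA ->]]. apply: Pa.
  have F1 : FE (map g (map h [:: p; 2 * p])) A by rewrite (map_gh ihg pE).
  have F2 := FE_pull (proj1 (proj2 ihg)) (posl_map kh pE) F1.
  apply: FE_up F2 _ _.
    move=> z [w [Aw <-]]. apply: hp. exact: (proj1 FA).
  move=> z z0 [_ Az]. exists (g z); split=> //. exact: hg.
move=> FB. have F1 := FE_pull kh pE (Pb _ FB).
exists (fun x => 0 < x /\ B (h x)); split=> //.
apply: functional_extensionality => z. apply: propositional_extensionality; split.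
  move=> Bz. have z0 := proj1 FB z Bz. exists (g z). rewrite hg //. split=> //. split=> //. exact: gp.
move=> [w [[w0 Bw] <-]]. exact: Bw.
Qed.
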